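(* Let $\mathrm{E}$ be $\mathrm{x}\simeq\mathrm{y}\diamond((\mathrm{y}\diamond(\mathrm{x}\diamond\mathrm{z}))\diamond\mathrm{z})$ and $\mathrm{E}'$ be $\mathrm{x}\simeq(\mathrm{x}\diamond((\mathrm{x}\diamond\mathrm{x})\diamond\mathrm{x}))\diamond\mathrm{x}$. Then: (a) the magma with carrier $\mathbb{Z}$ and operation $x\diamond y=2x-\lfloor y/2\rfloor$ satisfies $\mathrm{E}$ but not $\mathrm{E}'$, so $\mathrm{E}$ does not imply $\mathrm{E}'$; (b) every finite magma satisfying $\mathrm{E}$ satisfies $\mathrm{E}'$.
   Context: A magma is a set with a binary operation $\diamond$; it satisfies a law if the identity holds for all assignments of variables. *)

(* Defs.v *)
From Stdlib Require Import ZArith.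
From mathcomp Require Import all_boot.

Definition satisfies_E {T : Type} (op : T -> T -> T) : Prop :=
  forall x y z : T, x = op y (op (op y (op x z)) z).

Definition satisfies_E' {T : Type} (op : T -> T -> T) : Prop :=
  forall x : T, x = op (op x (op (op x x) x)) x.

Definition zop (x y : Z) : Z := (2 * x - Z.div y 2)%Z.

(* Main.v *)
Require Import Defs.
From Stdlib Require Import ZArith Lia.
From mathcomp Require Import all_boot.

Lemma zdiv2 (w : Z) : exists q r, (w = 2 * q + r /\ 0 <= r < 2 /\ Z.div w 2 = q)%Z.
Proof.
  exists (Z.div w 2), (Z.modulo w 2). split; [|split].
  - apply Z.div_mod; lia.
  - apply Z.mod_pos_bound; lia.
  - reflexivity.
Qed.

Lemma zop_E : satisfies_E zop.
Proof.
  move=> x y z. rewrite /zop.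
  have [q1 [r1 [H1 [B1 ->]]]] := zdiv2 z.
  have [q2 [r2 [H2 [B2 ->]]]] := zdiv2 (2 * x - q1)%Z.
  have [q3 [r3 [H3 [B3 ->]]]] := zdiv2 (2 * (2 * y - q2) - q1)%Z.
  lia.
Qed.

Lemma zop_notE' : ~ satisfies_E' zop.
Proof. move=> H. have := H 1%Z. by vm_compute. Qed.

Theorem mainTheorem17 :
  (* (a) *)
  (satisfies_E zop /\ ~ satisfies_E' zop /\
   ~ (forall (T : Type) (op : T -> T -> T), satisfies_E op -> satisfies_E' op)) /\
  (* (b) *)
  (forall (T : finType) (op : T -> T -> T), satisfies_E op -> satisfies_E' op).
Proof.
  split.
  - split; [exact zop_E|split; [exact zop_notE'|]].
    move=> H. apply: zop_notE'. exact: H _ _ zop_E.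
  - move=> T op HE x.
    have K : cancel (fun w => op (op x (op w w)) w) (op x).
      by move=> w /=; rewrite -HE.
    have Hinj : injective (op x) := can_inj (canF_sym K).
    apply: Hinj. exact: HE.
Qed.
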